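(* Let $S$ be either $\mathbb{Z}[j]=\{a+bj: a,b\in\mathbb{Z}\}$ or the Lipschitz order $\{r+sj: r,s\in\mathbb{Z}[i]\}=\{a+bi+cj+dk: a,b,c,d\in\mathbb{Z}\}$ in the Hamilton quaternions. Whenever $y,t\in S$ satisfy that $|y|^2$ divides $|t|^2$ in $\mathbb{Z}$, there exist $u,v\in S$ with $t=uv$ and $|u|^2=|y|^2$.
   Context: $|q|^2=q\overline{q}=a^2+b^2+c^2+d^2$ for $q=a+bi+cj+dk\in\mathbb{H}$. *)

(* Defs.v *)
From mathcomp Require Import all_boot all_order all_algebra.
Set Implicit Arguments. Unset Strict Implicit. Unset Printing Implicit Defensive.
Import Order.TTheory GRing.Theory Num.Theory.
Local Open Scope ring_scope.

(* q = re + im_i i + im_j j + im_k k with integer coordinates *)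
Record iquat := IQuat { qre : int; qii : int; qjj : int; qkk : int }.

(* Hamilton product: i^2 = j^2 = k^2 = ijk = -1 *)
Definition qmul (p q : iquat) : iquat :=
  IQuat (qre p * qre q - qii p * qii q - qjj p * qjj q - qkk p * qkk q)
        (qre p * qii q + qii p * qre q + qjj p * qkk q - qkk p * qjj q)
        (qre p * qjj q - qii p * qkk q + qjj p * qre q + qkk p * qii q)
        (qre p * qkk q + qii p * qjj q - qjj p * qii q + qkk p * qre q).

(* |q|^2 = q * conj q = a^2 + b^2 + c^2 + d^2 *)
Definition qnorm2 (q : iquat) : int :=
  qre q ^+ 2 + qii q ^+ 2 + qjj q ^+ 2 + qkk q ^+ 2.

Definition in_Zj (q : iquat) : Prop := qii q = 0 /\ qkk q = 0.

(* Lipschitz order: all a + b i + c j + d k with a,b,c,d in Z *)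
Definition in_Lipschitz (q : iquat) : Prop := True.

(* Main.v *)
Require Import Defs.
From mathcomp Require Import all_boot all_order all_algebra.
From mathcomp Require Import zify ring lra.
Import Order.TTheory GRing.Theory Num.Theory.
Local Open Scope ring_scope.

Definition qconj q := IQuat (qre q) (- qii q) (- qjj q) (- qkk q).
Definition qsc (c : int) q := IQuat (c * qre q) (c * qii q) (c * qjj q) (c * qkk q).
Definition qadd a b := IQuat (qre a + qre b) (qii a + qii b) (qjj a + qjj b) (qkk a + qkk b).
Definition qone := IQuat 1 0 0 0.
Definition qzero := IQuat 0 0 0 0.

Ltac qsolve := repeat match goal with q : iquat |- _ => destruct q end;
  rewrite /qmul /qconj /qsc /qadd /qone /qnorm2 /=; try congr IQuat; ring.

Lemma qmulA a b c : qmul a (qmul b c) = qmul (qmul a b) c. Proof. qsolve. Qed.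
Lemma qnormM a b : qnorm2 (qmul a b) = qnorm2 a * qnorm2 b. Proof. qsolve. Qed.
Lemma qmulCj a : qmul a (qconj a) = qsc (qnorm2 a) qone. Proof. qsolve. Qed.
Lemma qmuljC a : qmul (qconj a) a = qsc (qnorm2 a) qone. Proof. qsolve. Qed.
Lemma qconjM a b : qconj (qmul a b) = qmul (qconj b) (qconj a). Proof. qsolve. Qed.
Lemma qconjK a : qconj (qconj a) = a. Proof. qsolve. Qed.
Lemma qnormC a : qnorm2 (qconj a) = qnorm2 a. Proof. qsolve. Qed.
Lemma qmulsl c a b : qmul (qsc c a) b = qsc c (qmul a b). Proof. qsolve. Qed.
Lemma qmulsr c a b : qmul a (qsc c b) = qsc c (qmul a b). Proof. qsolve. Qed.
Lemma qsc1 a : qmul (qsc 1 qone) a = a. Proof. qsolve. Qed.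
Lemma qsc1' a : qmul qone a = a. Proof. qsolve. Qed.
Lemma qnorms c a : qnorm2 (qsc c a) = c ^+ 2 * qnorm2 a. Proof. qsolve. Qed.
Lemma qscA c d a : qsc c (qsc d a) = qsc (c * d) a. Proof. qsolve. Qed.
Lemma qconjs c a : qconj (qsc c a) = qsc c (qconj a). Proof. qsolve. Qed.
Lemma qmulDl a b c : qmul (qadd a b) c = qadd (qmul a c) (qmul b c). Proof. qsolve. Qed.
Lemma qnorm_ge0 a : 0 <= qnorm2 a. Proof. rewrite /qnorm2; nia. Qed.
Lemma qnorm0 a : qnorm2 a = 0 -> a = qzero.
Proof. case: a => a b c d; rewrite /qnorm2 /= => H. have Ha : a = 0 by nia.
have Hb : b = 0 by nia. have Hc : c = 0 by nia. have Hd : d = 0 by nia. by subst. Qed.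
Lemma qsc_inj c a b : c != 0 -> qsc c a = qsc c b -> a = b.
Proof. move=> /eqP Hc. case: a => a1 a2 a3 a4; case: b => b1 b2 b3 b4; rewrite /qsc /=.
case=> H1 H2 H3 H4. congr IQuat; nia. Qed.

Definition cq (a m : int) : int := if m < 2 * (a %% m)%Z then (a %/ m)%Z + 1 else (a %/ m)%Z.
Lemma cq_bound a m : 0 < m -> - m <= 2 * (a - m * cq a m) <= m.
Proof. move=> Hm. have := divz_eq a m. have := modz_ge0 a (lt0r_neq0 Hm). have := ltz_pmod a Hm. rewrite /cq. case: ifP => H; set q := (a %/ m)%Z; set r := (a %% m)%Z; move=> *; nia. Qed.
Lemma cq0 m : 0 < m -> cq 0 m = 0.
Proof. move=> Hm; rewrite /cq mod0z div0z. case: ifP => H; lia. Qed.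
Lemma copr (p : nat) (m : int) : prime p -> 0 < m < p%:Z -> coprimez p%:Z m.
Proof. case: m => [n|n] Hp Hm; last by lia.
have Hc : coprime p n.
  rewrite prime_coprime //. apply/negP => /dvdnP [k Hk]. subst n.
  move: Hm; rewrite !ltz_nat => /andP [H1 H2]. case: k H1 H2 => [|k]; rewrite ?mul0n //; lia.
rewrite /coprimez /gcdz /=. by move/eqP: Hc => ->.
Qed.
Lemma parity (m : int) : (exists s, m = 2 * s) \/ (exists s, m = 2 * s + 1).
Proof. have := divz_eq m 2. have := modz_ge0 m (isT : (2:int) != 0). have := ltz_pmod m (isT : (0:int) < 2).
move=> H1 H2 H3. have [H|H] : (m %% 2 = 0 \/ m %% 2 = 1)%Z by lia.
- left; exists (m %/ 2)%Z; lia.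
- right; exists (m %/ 2)%Z; lia. Qed.

Definition qquo m x := IQuat (cq (qre x) m) (cq (qii x) m) (cq (qjj x) m) (cq (qkk x) m).
Definition qres m x := qadd x (qsc (- m) (qquo m x)).
Lemma qres_eq m x : x = qadd (qres m x) (qsc m (qquo m x)).
Proof. rewrite /qres /qquo. qsolve. Qed.
Lemma qres_norm (m s : int) x : 0 < m -> m = 2 * s + 1 -> qnorm2 (qres m x) <= 4 * s ^+ 2.
Proof. move=> Hm Hs. case: x => a b c d. rewrite /qres /qquo /qnorm2 /qadd /qsc /=.
have := cq_bound a _ Hm. have := cq_bound b _ Hm. have := cq_bound c _ Hm. have := cq_bound d _ Hm.
set A := cq a m; set B := cq b m; set C := cq c m; set D := cq d m. move=> *. subst m. nia. Qed.
Lemma qnorm_add y k (m : int) : qnorm2 (qadd y (qsc m k)) = qnorm2 y + m * (2 * (qre y * qre k + qii y * qii k + qjj y * qjj k + qkk y * qkk k) + m * qnorm2 k).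
Proof. qsolve. Qed.

Lemma qdiv_copr (p c : int) a b : coprimez p c -> qsc c a = qsc p b -> exists e, a = qsc p e.
Proof. move=> Hc. case: a => a1 a2 a3 a4; case: b => b1 b2 b3 b4; rewrite /qsc /=; case=> H1 H2 H3 H4.
have F : forall x y : int, c * x = p * y -> exists e, x = p * e.
  move=> x y H. have : (p %| c * x)%Z by rewrite H; apply: dvdz_mulr; apply: dvdzz.
  rewrite Gauss_dvdzr // => /dvdzP [q Hq]. exists q. by rewrite Hq mulrC.
case: (F _ _ H1) => e1 ->; case: (F _ _ H2) => e2 ->; case: (F _ _ H3) => e3 ->; case: (F _ _ H4) => e4 ->.
by exists (IQuat e1 e2 e3 e4).
Qed.

Definition D (p : int) t x := exists w, qmul (qconj x) t = qsc p w.

Record closedS (S : iquat -> Prop) : Prop := ClosedS {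
  c1 : S qone;
  c2 : forall a b, S a -> S b -> S (qmul a b);
  c3 : forall a, S a -> S (qconj a);
  c4 : forall a b, S a -> S b -> S (qadd a b);
  c5 : forall c a, S a -> S (qsc c a);
  c6 : forall c a, c != 0 -> S (qsc c a) -> S a;
  c7 : forall m x, 0 < m -> S x -> S (qquo m x);
  c8 : forall x, S x -> (exists e, qnorm2 x = 2 * e) ->
       exists u w, S u /\ S w /\ x = qmul u w /\ qnorm2 u = 2 }.

Ltac tryw u w := exists u; exists w; split; [done|split;[done|split;[ rewrite /qmul /=; congr IQuat; lia | rewrite /qnorm2 /=; lia]]].

Lemma closed_Lip : closedS in_Lipschitz.
Proof. split=> //. case=> a b c d _ [e He]. rewrite /qnorm2 /= in He.
have [[A HA]|[A HA]] := parity a; have [[B HB]|[B HB]] := parity b;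
have [[C HC]|[C HC]] := parity c; have [[E HE]|[E HE]] := parity d;
  first [ tryw (IQuat 1 0 1 0) (IQuat (divz (a + c) 2) (divz (b + d) 2 - d) (divz (a + c) 2 - a) (divz (b + d) 2))
        | tryw (IQuat 1 1 0 0) (IQuat (divz (a + b) 2) (divz (a + b) 2 - a) (divz (c + d) 2) (divz (c + d) 2 - c))
        | tryw (IQuat 1 0 0 1) (IQuat (divz (a + d) 2) (divz (b + c) 2) (divz (b + c) 2 - b) (divz (a + d) 2 - a))
        | subst; lia ].
Qed.

Lemma closed_Zj : closedS in_Zj.
Proof. split.
- by [].
- case=> a1 a2 a3 a4 [b1 b2 b3 b4] [/= -> ->] [/= -> ->]; rewrite /qmul /in_Zj /=; split; ring.
- case=> a1 a2 a3 a4 [/= -> ->]; rewrite /qconj /in_Zj /=; split; ring.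
- case=> a1 a2 a3 a4 [b1 b2 b3 b4] [/= -> ->] [/= -> ->]; rewrite /qadd /in_Zj /=; split; ring.
- move=> c [a1 a2 a3 a4] [/= -> ->]; rewrite /qsc /in_Zj /=; split; ring.
- move=> c [a1 a2 a3 a4] /eqP Hc; rewrite /qsc /in_Zj /= => [[H1 H2]]; split; nia.
- move=> m [a1 a2 a3 a4] Hm [/= -> ->]; rewrite /qquo /in_Zj /=; split; exact: cq0.
- case=> a b c d [/= Hb Hd] [e He]. subst b d. rewrite /qnorm2 /= in He.
  have [[A HA]|[A HA]] := parity a; have [[C HC]|[C HC]] := parity c;
  first [ exists (IQuat 1 0 1 0); exists (IQuat (divz (a + c) 2) 0 (divz (a + c) 2 - a) 0);
          split; [done|split;[done|split;[ rewrite /qmul /=; congr IQuat; lia | rewrite /qnorm2 /=; lia]]]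
        | subst; lia ].
Qed.
From Stdlib Require Import Classical.

Arguments c1 {S}. Arguments c2 {S} _ {a b}. Arguments c3 {S} _ {a}. Arguments c4 {S} _ {a b}. Arguments c5 {S} _ c {a}. Arguments c6 {S} _ {c a}. Arguments c7 {S} _ {m x}. Arguments c8 {S} _ {x}.

Lemma qident y k (m r : int) : qnorm2 y = m * r ->
  qmul (qadd y (qsc m k)) (qconj y) = qsc m (qadd (qsc r qone) (qmul k (qconj y))).
Proof. case: y => a b c d; case: k => k1 k2 k3 k4; rewrite /qnorm2 /= => H.
rewrite /qmul /qadd /qsc /qconj /qone /=. congr IQuat; lia. Qed.

Lemma qzero_sc m k : qadd qzero (qsc m k) = qsc m k.
Proof. qsolve. Qed.

Lemma p_odd3 (p : nat) : prime p -> odd p -> (2 < p)%N.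
Proof. move=> Hp Ho. have := prime_gt1 Hp. case: p Hp Ho => [|[|[|p]]] //. Qed.

Lemma hb1 (m r s : int) : m = 2*s+1 -> 0 < m -> m * r <= 4 * s^+2 -> r < m.
Proof. move=> H1 H2 H3. nia. Qed.
Lemma hb2 (m r : int) : 0 < m -> 0 <= m * r -> 0 <= r.
Proof. move=> H1 H2. nia. Qed.
Lemma hb3 (m q p : int) : m * (q * p) = p -> 1 < m -> 0 < p -> False.
Proof. move=> H1 H2 H3. have H4 : m * q = 1.
  apply: (mulIf (lt0r_neq0 H3)). by rewrite mul1r -mulrA.
have [H5|H5] : q <= 0 \/ 1 <= q by lia.
- nia.
- nia. Qed.

Lemma descent S (HS : closedS S) (p : nat) (Hp : prime p) (Hodd : odd p) t (St : S t) :
  forall (n : nat) (m : int) x, m < n%:Z -> S x -> D p t x -> qnorm2 x = m * p%:Z -> 0 < m < p%:Z ->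
  exists u, S u /\ D p t u /\ qnorm2 u = p%:Z.
Proof.
have Hp3 := @p_odd3 p Hp Hodd.
elim=> [|n IH] m x Hmn Sx [W HW] Nx Hm; first lia.
have [Em|Hm1] := eqVneq m 1.
  exists x; split => //; split; first by exists W. by rewrite Nx Em mul1r.
have [[s Hs]|[s Hs]] := parity m.
- have Sx' := c3 HS Sx.
  have Nx' : exists e, qnorm2 (qconj x) = 2 * e by exists (s * p%:Z); rewrite qnormC Nx Hs; ring.
  have [u [w [Su [Sw [Ex Nu]]]]] := c8 HS Sx' Nx'.
  have Nw : qnorm2 w = s * p%:Z.
    have := qnormM u w. rewrite -Ex qnormC Nx Nu Hs. lia.
  have E1 : qmul (qconj u) (qmul (qconj x) t) = qsc 2 (qmul w t).
    by rewrite Ex -(qmulA u w t) (qmulA (qconj u) u) qmuljC Nu qmulsl qsc1'.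
  rewrite HW qmulsr in E1.
  have [e He] := qdiv_copr _ _ _ _ (copr p 2 Hp (ltac:(lia))) (esym E1).
  apply: (IH s (qconj w)).
  + lia.
  + exact (c3 HS Sw).
  + exists e. by rewrite qconjK.
  + by rewrite qnormC.
  + lia.
- have Hm0 : 0 < m by lia.
  set k := qquo m x. set y := qres m x.
  have Ex : x = qadd y (qsc m k) by exact: qres_eq.
  have Sk : S k := c7 HS Hm0 Sx.
  have Sy : S y by apply: (c4 HS Sx); apply: (c5 HS).
  have Ny : qnorm2 y <= 4 * s ^+ 2 by exact: qres_norm.
  have NN := qnorm_add y k m. rewrite -Ex Nx in NN.
  set X := (2 * _ + _) in NN.
  have Nyr : qnorm2 y = m * (p%:Z - X) by rewrite mulrBr NN; ring.
  set r := (p%:Z - X) in Nyr.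
  have Ny0 := qnorm_ge0 y.
  have Hr0 : 0 <= r by eapply (hb2 _ _ Hm0); rewrite -Nyr; exact Ny0.
  have Hrm : r < m by eapply (hb1 _ _ _ Hs Hm0); rewrite -Nyr; exact Ny.
  have Hr1 : r != 0.
    apply/eqP => Hr. rewrite Hr mulr0 in Nyr. have Y0 := qnorm0 _ Nyr.
    rewrite Y0 qzero_sc in Ex. rewrite Ex qnorms in Nx.
    have Emk : m * qnorm2 k = p%:Z.
      apply: (mulfI (lt0r_neq0 Hm0)). rewrite mulrA -expr2 Nx; ring.
    have Hpk : (p%:Z %| m * qnorm2 k)%Z by rewrite Emk dvdzz.
    rewrite Gauss_dvdzr in Hpk; last by apply: copr => //; lia.
    case/dvdzP: Hpk => q Hq. rewrite Hq in Emk. apply: (hb3 _ _ _ Emk); lia.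
  set z := qadd (qsc r qone) (qmul k (qconj y)).
  have Ez : qsc m z = qmul x (qconj y) by rewrite Ex; apply: esym; apply: qident.
  have Nz : qnorm2 z = p%:Z * r.
    have := f_equal qnorm2 Ez. rewrite qnorms qnormM qnormC Nx Nyr => H.
    apply: (mulfI (lt0r_neq0 Hm0)). apply: (mulfI (lt0r_neq0 Hm0)). rewrite !mulrA -expr2 H; ring.
  have Ez' : qsc m (qconj z) = qmul y (qconj x) by rewrite -qconjs Ez qconjM qconjK.
  have E2 : qsc m (qmul (qconj z) t) = qsc p (qmul y W).
    by rewrite -qmulsl Ez' -qmulA HW qmulsr.
  have [e He] := qdiv_copr _ _ _ _ (copr p m Hp (ltac:(lia))) E2.
  apply: (IH r z).
  + lia.
  + apply: (c4 HS); first exact: (c5 HS r (c1 HS)). apply: (c2 HS Sk). exact: (c3 HS Sy).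
  + by exists e.
  + by rewrite Nz mulrC.
  + lia.
Qed.

Lemma qident2 t k (p c : int) : qnorm2 t = p * c ->
  qmul (qconj (qadd t (qsc (- p) k))) t = qsc p (qadd (qsc c qone) (qsc (-1) (qmul (qconj k) t))).
Proof. case: t => a b d e; case: k => k1 k2 k3 k4; rewrite /qnorm2 /= => H.
rewrite /qmul /qadd /qsc /qconj /qone /=. congr IQuat; lia. Qed.

Lemma unfold_div S (HS : closedS S) u t v (p : int) : p != 0 -> S u -> S t ->
  qmul (qconj u) t = qsc p v -> qnorm2 u = p -> S v /\ t = qmul u v.
Proof. move=> Hp Su St Hv Nu. split.
- apply: (c6 HS Hp). rewrite -Hv. exact: (c2 HS (c3 HS Su) St).
- apply: (qsc_inj _ _ _ Hp). rewrite -qmulsr -Hv qmulA qmulCj Nu qmulsl qsc1'. done.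
Qed.

Lemma KL S (HS : closedS S) (p : nat) (Hp : prime p) (Hodd : odd p) t (St : S t)
  (Hd : exists c, qnorm2 t = p%:Z * c) (Hn : ~ exists k, t = qsc p k) :
  exists u v, S u /\ S v /\ t = qmul u v /\ qnorm2 u = p%:Z.
Proof.
have Hp3 := @p_odd3 p Hp Hodd. have Hp0 : (0:int) < p%:Z by lia.
case: Hd => c Hc.
set k := qquo p t. set x := qres p t.
have Et : t = qadd x (qsc p k) by exact: qres_eq.
have Sk : S k := c7 HS Hp0 St.
have Sx : S x by apply: (c4 HS St); apply: (c5 HS).
have Dx : D p t x by eexists; rewrite /x /qres; apply: qident2; exact Hc.
have [[s Hs]|[s Hs]] := parity p%:Z; first by exfalso; lia.
have Nx : qnorm2 x <= 4 * s ^+ 2 by exact: qres_norm.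
have NN := qnorm_add x k p. rewrite -Et Hc in NN.
set X := (2 * _ + _) in NN.
have Nxm : qnorm2 x = p%:Z * (c - X) by rewrite mulrBr NN; ring.
set m := c - X in Nxm.
have Nx0 := qnorm_ge0 x.
have Hm0 : 0 <= m by eapply (hb2 _ _ Hp0); rewrite -Nxm; exact Nx0.
have Hmp : m < p%:Z by eapply (hb1 _ _ _ Hs Hp0); rewrite -Nxm; exact Nx.
have Hm1 : m != 0.
  apply/eqP => Hm. rewrite Hm mulr0 in Nxm. have X0 := qnorm0 _ Nxm.
  apply: Hn. exists k. by rewrite Et X0 qzero_sc.
have [u [Su [[v Hv] Nu]]] := descent S HS p Hp Hodd t St p m x Hmp Sx Dx (ltac:(rewrite Nxm mulrC //)) (ltac:(lia)).
have [Sv Ev] := unfold_div S HS u t v p%:Z (lt0r_neq0 Hp0) Su St Hv Nu.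
by exists u, v.
Qed.

Lemma hb4 (p Y N : int) : 1 < p -> 1 < N -> N = p * Y -> 0 <= Y -> 0 < Y /\ Y < N.
Proof. move=> H1 H2 H3 H4. have H5 : 0 < Y by nia. split => //. nia. Qed.

Lemma hb5 (a : int) : 1 < a -> 1 < a ^+ 2.
Proof. move=> H. nia. Qed.

Lemma mainS S (HS : closedS S) : forall (n : nat) y t, S y -> S t -> qnorm2 y < n%:Z ->
  (exists c, qnorm2 t = qnorm2 y * c) ->
  exists u v, S u /\ S v /\ t = qmul u v /\ qnorm2 u = qnorm2 y.
Proof.
elim=> [|n IH] y t Sy St Hn [c Hc]; first by have := qnorm_ge0 y; lia.
have Ny0 := qnorm_ge0 y.
have [Y0|Y0] : qnorm2 y = 0 \/ 0 < qnorm2 y by lia.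
  have Ey := qnorm0 _ Y0. rewrite Y0 mul0r in Hc. have Et := qnorm0 _ Hc.
  exists (qsc 0 qone), (qsc 0 qone). split; first exact: (c5 HS 0 (c1 HS)).
  split; first exact: (c5 HS 0 (c1 HS)).
  rewrite Et Ey. split; rewrite /qmul /qsc /qone /qzero /qnorm2 /=; [congr IQuat|]; ring.
have [Y1|Y1] : qnorm2 y = 1 \/ 1 < qnorm2 y by lia.
  exists qone, t. split; first exact: (c1 HS). split => //. split; first by rewrite qsc1'.
  rewrite Y1 /qnorm2 /=; ring.
have step : forall (p : int) w t1 y2, 1 < p -> S w -> S t1 -> S y2 -> t = qmul w t1 ->
    qnorm2 w = p -> qnorm2 y = p * qnorm2 y2 ->
    exists u v, S u /\ S v /\ t = qmul u v /\ qnorm2 u = qnorm2 y.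
  move=> p w t1 y2 Hp Sw St1 Sy2 Et Nw Ny.
  have [H1 H2] := hb4 _ _ _ Hp Y1 Ny (qnorm_ge0 y2).
  move: Hc. rewrite Et qnormM Nw Ny => Hc.
  have Nt1 : qnorm2 t1 = qnorm2 y2 * c.
    have Hp0 : p != 0 by lia.
    apply: (mulfI Hp0). by rewrite Hc mulrA.
  have [u' [v' [Su' [Sv' [E' N']]]]] := IH y2 t1 Sy2 St1 (ltac:(lia)) (ex_intro _ c Nt1).
  exists (qmul w u'), v'. split; first exact: (c2 HS Sw Su'). split => //.
  split; first by rewrite E' qmulA.
  by rewrite qnormM Nw N'.
have [ny Eny] : exists ny : nat, qnorm2 y = ny%:Z.
  exists `|qnorm2 y|%N. by rewrite gez0_abs.
have Hny : (1 < ny)%N by lia.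
set p := pdiv ny.
have Hp : prime p := pdiv_prime Hny.
have Hp1 := prime_gt1 Hp.
have Hpz : (1 < p%:Z) by rewrite ltz_nat.
have [q Hq] : exists q : nat, ny = (q * p)%N by apply/dvdnP; exact: pdiv_dvd.
have Nyq : qnorm2 y = p%:Z * q%:Z by rewrite Eny Hq PoszM mulrC.
have [Ep|Hodd] := even_prime Hp.
  have Nt2 : exists e, qnorm2 t = 2 * e by exists (q%:Z * c); rewrite Hc Nyq Ep; ring.
  have [w [t1 [Sw [St1 [Et Nw]]]]] := c8 HS St Nt2.
  have Ny2 : exists e, qnorm2 y = 2 * e by exists q%:Z; rewrite Nyq Ep.
  have [w' [y2 [Sw' [Sy2 [Ey Nw']]]]] := c8 HS Sy Ny2.
  apply: (step 2 w t1 y2) => //. by rewrite Ey qnormM Nw'.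
have Hp0 : p%:Z != 0 by lia.
have [[y' Ey'] | Hy] := classic (exists k, y = qsc p k);
have [[t' Et'] | Ht] := classic (exists k, t = qsc p k).
-
  have Ny' : qnorm2 y = p%:Z ^+ 2 * qnorm2 y' by rewrite Ey' qnorms.
  have Hp2 : 1 < p%:Z ^+ 2 by exact: hb5.
  have [H1 H2] := hb4 (p%:Z ^+ 2) _ _ Hp2 Y1 Ny' (qnorm_ge0 y').
  have Nt' : qnorm2 t' = qnorm2 y' * c.
    apply: (mulfI (expf_neq0 2 Hp0)). rewrite mulrA -Ny' -Hc Et' qnorms //.
  have Sy' : S y' by apply: (c6 HS Hp0); rewrite -Ey'.
  have St' : S t' by apply: (c6 HS Hp0); rewrite -Et'.
  have [u' [v' [Su' [Sv' [E' N']]]]] := IH y' t' Sy' St' (ltac:(lia)) (ex_intro _ c Nt').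
  exists (qsc p u'), v'. split; first exact: (c5 HS). split => //.
  split; first by rewrite Et' E' qmulsl.
  by rewrite qnorms N' Ny'.
- have Hd : exists e, qnorm2 t = p%:Z * e by exists (q%:Z * c); rewrite Hc Nyq mulrA.
  have [w [t1 [Sw [St1 [Et Nw]]]]] := KL S HS p Hp Hodd t St Hd Ht.
  have Sy' : S y' by apply: (c6 HS Hp0); rewrite -Ey'.
  apply: (step p%:Z w t1 (qmul w y')) => //.
  + exact: (c2 HS Sw Sy').
  + by rewrite Ey' qnorms qnormM Nw expr2 mulrA.
- have Hd : exists e, qnorm2 y = p%:Z * e by exists q%:Z.
  have [w [y2 [Sw [Sy2 [Ey Nw]]]]] := KL S HS p Hp Hodd y Sy Hd Hy.
  have St' : S t' by apply: (c6 HS Hp0); rewrite -Et'.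
  apply: (step p%:Z w (qmul (qconj w) t') y2) => //.
  + exact: (c2 HS (c3 HS Sw) St').
  + by rewrite Et' qmulA qmulCj Nw qmulsl qsc1'.
  + by rewrite Ey qnormM Nw.
- have Hd : exists e, qnorm2 t = p%:Z * e by exists (q%:Z * c); rewrite Hc Nyq mulrA.
  have [w [t1 [Sw [St1 [Et Nw]]]]] := KL S HS p Hp Hodd t St Hd Ht.
  have Hd' : exists e, qnorm2 y = p%:Z * e by exists q%:Z.
  have [w' [y2 [Sw' [Sy2 [Ey Nw']]]]] := KL S HS p Hp Hodd y Sy Hd' Hy.
  apply: (step p%:Z w t1 y2) => //.
  by rewrite Ey qnormM Nw'.
Qed.

Theorem mainTheorem12 (S : iquat -> Prop)
  (HS : S = in_Zj \/ S = in_Lipschitz)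
  (y t : iquat) (Hy : S y) (Ht : S t)
  (Hdvd : (qnorm2 y %| qnorm2 t)%Z) :
  exists u v : iquat, S u /\ S v /\ t = qmul u v /\ qnorm2 u = qnorm2 y.
Proof.
have HSc : closedS S by case: HS => ->; [exact: closed_Zj | exact: closed_Lip].
case/dvdzP: Hdvd => c Hc.
apply: (mainS S HSc (`|qnorm2 y|%N.+1) y t Hy Ht).
- have := qnorm_ge0 y. rewrite -[X in X < _](gez0_abs (qnorm_ge0 y)). lia.
- exists c. by rewrite Hc mulrC.
Qed.
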